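(* In the 3-body problem in ${\bf H}^2$ with masses $m_1,m_2,m_3>0$, fix $z>1$ and $\rho=(z^2-1)^{1/2}$. There exists $\omega\ne0$ such that ${\bf q}_i(t)=(\rho\cos(\omega t+\alpha_i),\rho\sin(\omega t+\alpha_i),z)$ with $\alpha_1=0,\alpha_2=2\pi/3,\alpha_3=4\pi/3$ is a solution of the equations of motion (the equilateral triangle rotating in its own plane $z=$ constant as an elliptic relative equilibrium) if and only if $m_1=m_2=m_3$.
   Context: The $n$-body problem in ${\bf H}^2$ (Weierstrass model): with the Lorentz inner product ${\bf a}\boxdot{\bf b}=a_xb_x+a_yb_y-a_zb_z$ on $\mathbb R^3$, ${\bf H}^2=\{(x,y,z): x^2+y^2-z^2=-1,\ z>0\}$. Bodies of masses $m_1,\dots,m_n>0$ have positions ${\bf q}_i=(x_i,y_i,z_i)\in{\bf H}^2$ and satisfy $$\ddot{\bf q}_i=\sum_{j\ne i}\frac{m_j[{\bf q}_j+({\bf q}_i\boxdot{\bf q}_j){\bf q}_i]}{[({\bf q}_i\boxdot{\bf q}_j)^2-1]^{3/2}}+(\dot{\bf q}_i\boxdot\dot{\bf q}_i){\bf q}_i,\qquad {\bf q}_i\boxdot{\bf q}_i=-1,\ \ {\bf q}_i\boxdot\dot{\bf q}_i=0,$$ $i=1,\dots,n$, defined only for collisionless configurations (${\bf q}_i\ne{\bf q}_j$ for $i\ne j$). *)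

(* Defs.v *)
From Stdlib Require Import Reals List.
Import ListNotations.
Open Scope R_scope.

Record V3 := mkV3 { vx : R; vy : R; vz : R }.

Definition v0 : V3 := mkV3 0 0 0.
Definition vadd (a b : V3) : V3 := mkV3 (vx a + vx b) (vy a + vy b) (vz a + vz b).
Definition vscale (c : R) (a : V3) : V3 := mkV3 (c * vx a) (c * vy a) (c * vz a).

Definition lor (a b : V3) : R := vx a * vx b + vy a * vy b - vz a * vz b.

Definition force (n : nat) (m : nat -> R) (q : nat -> V3) (i : nat) : V3 :=
  fold_right vadd v0
    (map (fun j => if Nat.eqb j i then v0 else
            vscale (m j / Rpower ((lor (q i) (q j)) ^ 2 - 1) (3 / 2))
                   (vadd (q j) (vscale (lor (q i) (q j)) (q i))))
         (seq 0 n)).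

Definition has_deriv (f g : R -> V3) : Prop :=
  forall t, derivable_pt_lim (fun s => vx (f s)) t (vx (g t)) /\
            derivable_pt_lim (fun s => vy (f s)) t (vy (g t)) /\
            derivable_pt_lim (fun s => vz (f s)) t (vz (g t)).

(* q : nat -> R -> V3 (body index, time) is a solution, defined for all t in R,
   of the n-body equations of motion in H^2 (Weierstrass model). *)
Definition is_solution (n : nat) (m : nat -> R) (q : nat -> R -> V3) : Prop :=
  (forall t i j, (i < n)%nat -> (j < n)%nat -> i <> j -> q i t <> q j t) /\
  (forall i, (i < n)%nat ->
     exists v a : R -> V3,
       has_deriv (q i) v /\ has_deriv v a /\
       forall t,
         a t = vadd (force n m (fun j => q j t) i)
                    (vscale (lor (v t) (v t)) (q i t)) /\
         lor (q i t) (q i t) = -1 /\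
         lor (q i t) (v t) = 0 /\
         vz (q i t) > 0).

(* Masses of the three bodies (indices 0,1,2 correspond to bodies 1,2,3). *)
Definition mass3 (m1 m2 m3 : R) (i : nat) : R :=
  match i with 0%nat => m1 | 1%nat => m2 | _ => m3 end.

Definition alpha3 (i : nat) : R :=
  match i with 0%nat => 0 | 1%nat => 2 * PI / 3 | _ => 4 * PI / 3 end.

Definition rot_triangle (z w : R) (i : nat) (t : R) : V3 :=
  let rho := sqrt (z ^ 2 - 1) in
  mkV3 (rho * cos (w * t + alpha3 i)) (rho * sin (w * t + alpha3 i)) z.

(* Main.v *)
Require Import Defs.
From Stdlib Require Import Reals Lra Psatz FunctionalExtensionality.
Open Scope R_scope.

Lemma dlin w a t : derivable_pt_lim (fun s => w*s+a) t w.
Proof.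
  pose proof (derivable_pt_lim_plus _ _ t _ _ (derivable_pt_lim_scal id w t _ (derivable_pt_lim_id t)) (derivable_pt_lim_const a t)) as H.
  assert (E: w*1+0 = w) by ring. rewrite E in H. exact H.
Qed.

Lemma dcos A w a t : derivable_pt_lim (fun s => A * cos (w*s+a)) t ((-(A*w))*sin(w*t+a)).
Proof.
  pose proof (derivable_pt_lim_scal _ A t _ (derivable_pt_lim_comp _ cos t _ _ (dlin w a t) (derivable_pt_lim_cos _))) as H.
  replace ((-(A*w))*sin(w*t+a)) with (A * (- sin (w*t+a) * w)) by ring. exact H.
Qed.

Lemma dsin A w a t : derivable_pt_lim (fun s => A * sin (w*s+a)) t (A*w*cos(w*t+a)).
Proof.
  pose proof (derivable_pt_lim_scal _ A t _ (derivable_pt_lim_comp _ sin t _ _ (dlin w a t) (derivable_pt_lim_sin _))) as H.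
  replace (A*w*cos(w*t+a)) with (A * (cos (w*t+a) * w)) by ring. exact H.
Qed.

Lemma dconst c t : derivable_pt_lim (fun _ => c) t 0.
Proof. exact (derivable_pt_lim_const c t). Qed.

Lemma c23 : cos (2*PI/3) = -1/2.
Proof. replace (2*PI/3) with (PI - PI/3) by field. rewrite (Rtrigo_facts.cos_pi_minus (PI/3)), cos_PI3. lra. Qed.
Lemma c43 : cos (4*PI/3) = -1/2.
Proof. replace (4*PI/3) with (PI/3 + PI) by field. rewrite neg_cos, cos_PI3. lra. Qed.
Lemma s23 : sin (2*PI/3) = sin (PI/3).
Proof. replace (2*PI/3) with (PI - PI/3) by field. apply sin_PI_x. Qed.
Lemma s43 : sin (4*PI/3) = - sin (PI/3).
Proof. replace (4*PI/3) with (PI/3 + PI) by field. apply neg_sin. Qed.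

Lemma sumcos th : cos th + cos (th + 2*PI/3) + cos (th + 4*PI/3) = 0.
Proof. rewrite !cos_plus, c23, c43, s23, s43. field. Qed.
Lemma sumsin th : sin th + sin (th + 2*PI/3) + sin (th + 4*PI/3) = 0.
Proof. rewrite !sin_plus, c23, c43, s23, s43. field. Qed.

Lemma cospair x y : (x - y = 2*PI/3 \/ x - y = 4*PI/3 \/ y - x = 2*PI/3 \/ y - x = 4*PI/3) ->
  cos x * cos y + sin x * sin y = -1/2.
Proof.
  rewrite <- cos_minus. intros [H|[H|[H|H]]].
  - rewrite H, c23; reflexivity.
  - rewrite H, c43; reflexivity.
  - replace (x-y) with (-(y-x)) by ring; rewrite cos_neg, H, c23; reflexivity.
  - replace (x-y) with (-(y-x)) by ring; rewrite cos_neg, H, c43; reflexivity.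
Qed.

Definition cc (z : R) := -(3*z^2-1)/2.
Definition DD (z : R) := Rpower (cc z ^ 2 - 1) (3/2).

Lemma DD_pos z : 0 < DD z.
Proof. unfold DD, Rpower. apply exp_pos. Qed.

Lemma sq_rho z : 1 < z -> sqrt (z^2-1) * sqrt (z^2-1) = z^2-1.
Proof. intros. apply sqrt_sqrt. nra. Qed.

Lemma lor_rt z w t i j : 1 < z -> (i < 3)%nat -> (j < 3)%nat -> i <> j ->
  lor (rot_triangle z w i t) (rot_triangle z w j t) = cc z.
Proof.
  intros Hz Hi Hj Hij. unfold cc; cbv beta iota zeta delta [lor rot_triangle vx vy vz].
  assert (E: forall a b, sqrt (z^2-1) * cos a * (sqrt (z^2-1) * cos b) +
     sqrt (z^2-1) * sin a * (sqrt (z^2-1) * sin b) - z*z =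
     (sqrt (z^2-1) * sqrt (z^2-1)) * (cos a * cos b + sin a * sin b) - z*z) by (intros; ring).
  rewrite E, sq_rho by exact Hz. rewrite cospair. field.
  destruct i as [|[|[|i]]]; destruct j as [|[|[|j]]]; try lia; cbv beta iota delta [alpha3];
  first [left; field | right; left; field | right; right; left; field | right; right; right; field].
Qed.

Lemma lor_self z w t i : 1 < z -> lor (rot_triangle z w i t) (rot_triangle z w i t) = -1.
Proof.
  intros Hz. cbv beta iota zeta delta [lor rot_triangle vx vy vz].
  assert (E: forall a, sqrt (z^2-1) * cos a * (sqrt (z^2-1) * cos a) +
     sqrt (z^2-1) * sin a * (sqrt (z^2-1) * sin a) - z*z =
     (sqrt (z^2-1) * sqrt (z^2-1)) * (sin a ^2 + cos a ^2) - z*z) by (intros; ring).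
  rewrite E, sq_rho by exact Hz. pose proof (sin2_cos2 (w*t+alpha3 i)). unfold Rsqr in H.
  replace (sin (w * t + alpha3 i) ^ 2 + cos (w * t + alpha3 i) ^ 2) with 1 by (rewrite <- H; ring). ring.
Qed.

Lemma V3ext a b : vx a = vx b -> vy a = vy b -> vz a = vz b -> a = b.
Proof. destruct a, b; cbn; intros; subst; reflexivity. Qed.

Definition vel z w i t := mkV3 ((-(sqrt (z^2-1)*w)) * sin (w*t+alpha3 i)) ((sqrt (z^2-1)*w) * cos (w*t+alpha3 i)) 0.
Definition acc z w i t := mkV3 ((-(sqrt (z^2-1)*w)) * w * cos (w*t+alpha3 i)) ((-(sqrt (z^2-1)*w * w)) * sin (w*t+alpha3 i)) 0.

Lemma hd_q z w i : has_deriv (rot_triangle z w i) (vel z w i).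
Proof.
  intro t; split; [|split].
  - exact (dcos (sqrt (z^2-1)) w (alpha3 i) t).
  - exact (dsin (sqrt (z^2-1)) w (alpha3 i) t).
  - exact (dconst z t).
Qed.

Lemma hd_v z w i : has_deriv (vel z w i) (acc z w i).
Proof.
  intro t; split; [|split].
  - exact (dsin (-(sqrt (z^2-1)*w)) w (alpha3 i) t).
  - exact (dcos (sqrt (z^2-1)*w) w (alpha3 i) t).
  - exact (dconst 0 t).
Qed.

Lemma lor_vel z w i t : 1 < z -> lor (vel z w i t) (vel z w i t) = (z^2-1)*(w*w).
Proof.
  intros Hz. cbv beta iota delta [lor vel vx vy vz].
  pose proof (sin2_cos2 (w*t+alpha3 i)) as H. unfold Rsqr in H.
  transitivity (sqrt (z^2-1)*(sqrt (z^2-1))*(w*w) * (sin (w * t + alpha3 i) * sin (w * t + alpha3 i) +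
    cos (w * t + alpha3 i) * cos (w * t + alpha3 i))).
  - ring.
  - rewrite H, (sq_rho z Hz). ring.
Qed.

Lemma suff m z w : 0 < m -> 1 < z -> w * w = 3 * m / DD z ->
  is_solution 3 (mass3 m m m) (rot_triangle z w).
Proof.
  intros Hm Hz Hw. split.
  - intros t i j Hi Hj Hij E.
    pose proof (lor_rt z w t i j Hz Hi Hj Hij) as H1. rewrite E, lor_self in H1 by exact Hz.
    unfold cc in H1. nra.
  - intros i Hi. exists (vel z w i), (acc z w i). split; [apply hd_q|split; [apply hd_v|]].
    intro t. split; [|split; [|split]].
    + unfold force. cbv beta iota delta [List.map List.seq List.fold_right Nat.eqb].
      destruct i as [|[|[|i]]]; try lia; cbv beta iota delta [Nat.eqb];
      rewrite ?lor_rt by (first [exact Hz | lia]); fold (DD z); rewrite lor_vel by exact Hz.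
      all: assert (W1: forall x, -(x*w)*w = -x*(w*w)) by (intros; ring);
      assert (W2: forall x, -(x*w*w) = -x*(w*w)) by (intros; ring);
      rewrite Hw; pose proof (DD_pos z) as HD;
      pose proof (sumcos (w*t)) as SC; pose proof (sumsin (w*t)) as SS;
      assert (EC: cos (w*t) = - cos (w*t+2*PI/3) - cos (w*t+4*PI/3)) by lra;
      assert (ES: sin (w*t) = - sin (w*t+2*PI/3) - sin (w*t+4*PI/3)) by lra;
      apply V3ext; cbv beta iota zeta delta [vx vy vz vadd vscale v0 rot_triangle acc mass3 alpha3];
      rewrite ?Rplus_0_r, ?EC, ?ES; unfold cc;
      rewrite ?W1, ?W2, ?Hw; field; lra.
    + apply lor_self; exact Hz.
    + cbv beta iota zeta delta [lor vel rot_triangle vx vy vz]. ring.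
    + cbv beta iota zeta delta [rot_triangle vz]. lra.
Qed.

Lemma hd_uniq f g1 g2 : has_deriv f g1 -> has_deriv f g2 -> g1 = g2.
Proof.
  intros H1 H2. apply functional_extensionality. intro t.
  destruct (H1 t) as [A1 [B1 C1]]. destruct (H2 t) as [A2 [B2 C2]].
  apply V3ext; eapply uniqueness_limite; eassumption.
Qed.

Lemma sol_eq m z w i t : is_solution 3 m (rot_triangle z w) -> (i < 3)%nat ->
  acc z w i t = vadd (force 3 m (fun j => rot_triangle z w j t) i)
     (vscale (lor (vel z w i t) (vel z w i t)) (rot_triangle z w i t)).
Proof.
  intros [_ H] Hi. destruct (H i Hi) as [v [a [Hq [Hv He]]]].
  assert (Ev: v = vel z w i) by (eapply hd_uniq; [exact Hq | apply hd_q]). subst v.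
  assert (Ea: a = acc z w i) by (eapply hd_uniq; [exact Hv | apply hd_v]). subst a.
  apply (He t).
Qed.

Lemma nec m1 m2 m3 z w : 1 < z -> is_solution 3 (mass3 m1 m2 m3) (rot_triangle z w) ->
  m1 = m2 /\ m2 = m3.
Proof.
  intros Hz H.
  pose proof (sol_eq _ _ _ 0 0 H ltac:(lia)) as E0.
  pose proof (sol_eq _ _ _ 1 0 H ltac:(lia)) as E1.
  pose proof (sol_eq _ _ _ 2 0 H ltac:(lia)) as E2.
  apply (f_equal vz) in E0, E1, E2.
  unfold force in E0, E1, E2. cbv beta iota delta [List.map List.seq List.fold_right Nat.eqb] in E0, E1, E2.
  rewrite ?lor_rt, ?lor_vel in E0, E1, E2 by (first [exact Hz | lia]). fold (DD z) in E0, E1, E2.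
  cbv beta iota zeta delta [vx vy vz vadd vscale v0 rot_triangle acc mass3] in E0, E1, E2.
  pose proof (DD_pos z) as HD. unfold cc in *.
  set (L := (z^2-1)*(w*w)) in *.
  assert (K: forall a, a / DD z * (z + - (3 * z ^ 2 - 1) / 2 * z) = a * (3 * z * (1 - z^2) / (2 * DD z))) by (intros; field; lra).
  rewrite !K in E0, E1, E2.
  assert (Kne: 3 * z * (1 - z^2) / (2 * DD z) <> 0).
  { unfold Rdiv. apply Rmult_integral_contrapositive; split.
    - apply Rmult_integral_contrapositive; split; nra.
    - apply Rinv_neq_0_compat. lra. }
  set (X := 3 * z * (1 - z^2) / (2 * DD z)) in *.
  split.
  - apply (Rmult_eq_reg_r X); [|exact Kne]. lra.
  - apply (Rmult_eq_reg_r X); [|exact Kne]. lra.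
Qed.

Theorem mainTheorem14 (m1 m2 m3 z : R) :
  0 < m1 -> 0 < m2 -> 0 < m3 -> 1 < z ->
  ((exists w : R, w <> 0 /\ is_solution 3 (mass3 m1 m2 m3) (rot_triangle z w))
   <-> (m1 = m2 /\ m2 = m3)).
Proof.
  intros H1 H2 H3 Hz. split.
  - intros [w [_ Hs]]. exact (nec m1 m2 m3 z w Hz Hs).
  - intros [<- <-]. pose proof (DD_pos z) as HD.
    assert (P: 0 < 3 * m1 / DD z) by (apply Rdiv_lt_0_compat; lra).
    exists (sqrt (3 * m1 / DD z)). split.
    + apply Rgt_not_eq. apply sqrt_lt_R0. exact P.
    + apply suff; [exact H1 | exact Hz | apply sqrt_sqrt; lra].
Qed.
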